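(* For every instance, a probability distribution $q$ on the tests is a memoryless schedule attaining $\mathrm{opt}_M\text{-}\mathrm{MAX}$ (the infimum over memoryless schedules of the common value $\mathrm{WMP}[q]=\mathrm{MWP}[q]=\mathrm{WEP}[q]=\max_e p_e/Q_e$) if and only if $q$ (together with some $z$) is an optimal solution of the linear program $$\text{maximize } z\quad\text{subject to } \frac{1}{p_e}\sum_{i:\,e\in s_i}q_i\ge z\ \ (e\in E),\quad q_i\ge 0\ \ (i\in[m]),\quad \sum_iq_i=1.$$
   Context: An instance consists of a finite set $E$ of elements with positive weights $(p_e)_{e\in E}$ normalized so that $\max_e p_e=1$, and $m$ tests; test $i\in[m]$ is a subset $s_i\subseteq E$. A memoryless schedule is a probability distribution $q$ on $[m]$; it generates a test sequence by drawing each test independently according to $q$. $Q_e=\sum_{i:e\in s_i}q_i$. Detection time $T(e,t)=\mathbb{E}[1+\min\{h\ge0:e\in s_{\sigma_{t+h}}\}]$; $\mathrm{WMP}=\sup_{e,t}p_eT(e,t)$, $\mathrm{WEP}=\max_e p_e\lim_H\frac1H\sum_{t\le H}T(e,t)$, $\mathrm{MWP}=\lim_H\frac1H\sum_{t\le H}\max_ep_eT(e,t)$. *)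

(* Defs.v *)
From HB Require Import structures.
From mathcomp Require Import all_boot all_order all_algebra.
From mathcomp Require Import boolp classical_sets reals constructive_ereal ereal.
Set Implicit Arguments. Unset Strict Implicit. Unset Printing Implicit Defensive.
Import Order.TTheory GRing.Theory Num.Theory.
Local Open Scope ring_scope.

Section Defs.
Variables (R : realType) (E : finType) (m : nat).

Definition valid_weights (p : E -> R) : Prop :=
  (forall e, 0 < p e) /\ (forall e, p e <= 1) /\ (exists e, p e = 1).

Definition is_distribution (q : 'I_m -> R) : Prop :=
  (forall i, 0 <= q i) /\ \sum_(i < m) q i = 1.

Definition Qe (s : 'I_m -> {set E}) (q : 'I_m -> R) (e : E) : R :=
  \sum_(i < m | e \in s i) q i.

(* p_e / Q_e as an extended real, = +oo when Q_e = 0 (e never detected) *)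
Definition ratio (p : E -> R) (s : 'I_m -> {set E}) (q : 'I_m -> R) (e : E)
  : \bar R :=
  if Qe s q e == 0 then +oo%E else (p e / Qe s q e)%:E.

(* Common value WMP[q] = MWP[q] = WEP[q] = max_e p_e / Q_e of a memoryless
   schedule q *)
Definition memoryless_cost (p : E -> R) (s : 'I_m -> {set E})
  (q : 'I_m -> R) : \bar R :=
  (\big[Order.max/-oo]_(e : E) ratio p s q e)%E.

Definition optM_MAX (p : E -> R) (s : 'I_m -> {set E}) : \bar R :=
  ereal_inf [set memoryless_cost p s q | q in is_distribution].

Definition LP_feasible (p : E -> R) (s : 'I_m -> {set E})
  (q : 'I_m -> R) (z : R) : Prop :=
  (forall e, z <= (p e)^-1 * Qe s q e) /\
  (forall i, 0 <= q i) /\ \sum_(i < m) q i = 1.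

Definition LP_optimal (p : E -> R) (s : 'I_m -> {set E})
  (q : 'I_m -> R) (z : R) : Prop :=
  LP_feasible p s q z /\
  (forall q' z', LP_feasible p s q' z' -> z' <= z).

End Defs.

(* Main.v *)
Require Import Defs.
From HB Require Import structures.
From mathcomp Require Import all_boot all_order all_algebra.
From mathcomp Require Import boolp classical_sets reals constructive_ereal ereal.
Import Order.TTheory GRing.Theory Num.Theory.
Local Open Scope ring_scope.

Section H.
Variables (R : realType) (E : finType) (m : nat).
Variables (p : E -> R) (s : 'I_m -> {set E}).
Hypothesis hp : forall e, 0 < p e.

Definition Ff (x : R) : \bar R := if x == 0 then (+oo : \bar R)%E else (x^-1)%:E.
Definition rr (q : 'I_m -> R) e := (p e)^-1 * Qe s q e.

Lemma Qe_ge0 (q : 'I_m -> R) e : (forall i, 0 <= q i) -> 0 <= Qe s q e.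
Proof. by move=> h; apply: sumr_ge0 => i _. Qed.

Lemma rr_ge0 (q : 'I_m -> R) e : (forall i, 0 <= q i) -> 0 <= rr q e.
Proof. by move=> h; rewrite /rr mulr_ge0 ?invr_ge0 ?(ltW (hp e)) ?Qe_ge0. Qed.

Lemma ratioF (q : 'I_m -> R) e : Defs.ratio p s q e = Ff (rr q e).
Proof.
rewrite /Defs.ratio /Ff /rr mulf_eq0 invr_eq0 (gt_eqF (hp e)) /=.
case: ifP => // _; by rewrite invfM invrK mulrC.
Qed.

Lemma Ff_anti a b : 0 <= b -> b <= a -> (Ff a <= Ff b)%E.
Proof.
move=> b0 ba; rewrite /Ff; case: (eqVneq a 0) => [a0|a0].
  have -> : b = 0 by apply/eqP; rewrite eq_le b0 -a0 ba.
  by rewrite eqxx.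
case: (eqVneq b 0) => [_|bn0]; first by rewrite leey.
have bp : 0 < b by rewrite lt_def bn0 b0.
have ap : 0 < a by apply: lt_le_trans ba.
by rewrite lee_fin lef_pV2 ?posrE.
Qed.

Lemma Ff_refl a b : 0 <= a -> 0 <= b -> (Ff a <= Ff b)%E -> b <= a.
Proof.
move=> a0 b0; rewrite /Ff; case: (eqVneq b 0) => [->|bn0] //.
case: (eqVneq a 0) => [->|an0]; first by rewrite leye_eq.
have bp : 0 < b by rewrite lt_def bn0 b0.
have ap : 0 < a by rewrite lt_def an0 a0.
by rewrite lee_fin lef_pV2 ?posrE.
Qed.

Variable e0 : E.

Definition emin (q : 'I_m -> R) := [arg min_(e < e0) rr q e]%O.
Definition zq (q : 'I_m -> R) := rr q (emin q).

Lemma zq_min (q : 'I_m -> R) e : zq q <= rr q e.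
Proof. rewrite /zq /emin; case: (@arg_minP _ _ _ e0 xpredT (fun e => rr q e) isT) => i _ H; exact: H. Qed.

Lemma cost_zq (q : 'I_m -> R) : (forall i, 0 <= q i) -> memoryless_cost p s q = Ff (zq q).
Proof.
move=> h; apply/eqP; rewrite eq_le; apply/andP; split.
  apply/bigmax_leP; split; first by rewrite leNye.
  by move=> e _; rewrite ratioF; apply: Ff_anti; rewrite ?zq_min // rr_ge0.
by rewrite /zq -ratioF; apply: (le_bigmax _ (fun e => Defs.ratio p s q e)).
Qed.

Lemma feas_zq (q : 'I_m -> R) z : LP_feasible p s q z <-> is_distribution q /\ z <= zq q.
Proof.
split.
  case=> h1 [h2 h3]; split; first by [].
  exact: h1.
case=> [[h2 h3] hz]; split; last by [].
by move=> e; apply: (le_trans hz); apply: zq_min.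
Qed.
End H.
Arguments feas_zq {R E m} p s e0 q z.
Arguments zq {R E m} p s e0 q.
Arguments cost_zq {R E m p s} hp e0 {q}.
Arguments rr_ge0 {R E m p s} hp q e.
Arguments Ff_refl {R} a b.
Arguments Ff_anti {R} a b.

Theorem theorem2 (R : realType) (E : finType) (m : nat)
  (p : E -> R) (s : 'I_m -> {set E}) (hp : valid_weights p)
  (q : 'I_m -> R) :
  (is_distribution q /\ memoryless_cost p s q = optM_MAX p s) <->
  (exists z : R, LP_optimal p s q z).
Proof.
case: hp => hpos [_ [e0 _]].
split.
  case=> hd hc; exists (zq p s e0 q); split.
    by apply/(feas_zq p s e0); split.
  move=> q' z' /(feas_zq p s e0) [hd' hz']; apply: (le_trans hz').
  have hle : (memoryless_cost p s q <= memoryless_cost p s q')%E.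
    by rewrite hc; apply: ereal_inf_lbound; exists q'.
  rewrite (cost_zq hpos e0 hd.1) (cost_zq hpos e0 hd'.1) in hle.
  by apply: Ff_refl hle; apply: rr_ge0 => //; [exact: hd.1 | exact: hd'.1].
case=> z [hf hopt]; have [hd hz] := (feas_zq p s e0 q z).1 hf.
split; first by [].
apply/eqP; rewrite eq_le; apply/andP; split; last first.
  by apply: ereal_inf_lbound; exists q.
apply/ereal_infP => _ [q' hd' <-].
rewrite (cost_zq hpos e0 hd.1) (cost_zq hpos e0 hd'.1).
apply: Ff_anti; first by apply: rr_ge0 => //; exact: hd'.1.
apply: (le_trans _ hz); apply: (hopt q' (zq p s e0 q')).
by apply/(feas_zq p s e0); split.
Qed.
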